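(* Assume the setting in the context, with a decomposition of $\mathcal X$ over $A$, $g\in\mathcal G_s$, an integer $T>0$, and $$\operatorname*{argmin}_{u\in\mathcal U} J^*_{t+1}(Ax+Bu)\cap\Big[\bigoplus_{i\in\mathcal I}\mathcal E_i\Big]\neq\emptyset\quad\text{for all }x\in\mathcal X,\ t\in\{0,\dots,T-1\}.$$ Then for every $t\in\{0,\dots,T\}$ and every $i\in\mathcal I$, the restriction of $J^*_t$ to $\mathcal X_i$ equals $\bar J^*_{i,t}$, i.e. $J^*_t(z)=\bar J^*_{i,t}(z)$ for all $z\in\mathcal X_i$.
   Context: Let $\mathcal F$ be a field and $\mathcal X,\mathcal U$ finite-dimensional vector spaces over $\mathcal F$. Let $A:\mathcal X\to\mathcal X$ and $B:\mathcal U\to\mathcal X$ be linear maps with $B$ injective, and let $g:\mathcal X\to\mathbb R_{\ge0}$ satisfy $g(x)=0\iff x=0$. Standing assumption: all minima appearing below are attained. For the finite-horizon problem $(A,B,g,T)$ associated with $x_{t+1}=Ax_t+Bu_t$, the cost-to-go functions are $J^*_T=g$ and $J^*_t(x)=g(x)+\min_{u\in\mathcal U}J^*_{t+1}(Ax+Bu)$ for $t=0,\dots,T-1$. A decomposition of $\mathcal X$ over $A$ is a direct sum $\mathcal X=\mathcal X_1\oplus\cdots\oplus\mathcal X_r$ with $r>1$ and $A\mathcal X_i\subseteq\mathcal X_i$ for all $i\in\mathcal I=\{1,\dots,r\}$; $\rho_i:\mathcal X\to\mathcal X_i$ is the projection along the other summands. $\mathcal G_s$ is the set of $h:\mathcal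 X\to\mathbb R_{\ge0}$ with $h(x)=\sum_i h(\rho_i(x))$ for all $x$. $\mathcal E_i=\{u\in\mathcal U:Bu\in\mathcal X_i\}$. For the subproblem $(A,B|_{\mathcal E_i},g,T)$ (system $x_{i,t+1}=Ax_{i,t}+B\bar u_{i,t}$, states in $\mathcal X_i$, inputs in $\mathcal E_i$), the cost-to-go functions $\bar J^*_{i,t}:\mathcal X_i\to\mathbb R_{\ge0}$ are $\bar J^*_{i,T}=g|_{\mathcal X_i}$ and $\bar J^*_{i,t}(z)=g(z)+\min_{u\in\mathcal E_i}\bar J^*_{i,t+1}(Az+Bu)$ for $t=0,\dots,T-1$. *)

(* Defs.v *)
From HB Require Import structures.
From mathcomp Require Import all_boot all_order all_algebra.
Set Implicit Arguments. Unset Strict Implicit. Unset Printing Implicit Defensive.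
Import Order.TTheory GRing.Theory Num.Theory.
Local Open Scope ring_scope.

Definition is_decomposition (F : fieldType) (X : vectType F) (A : 'End(X))
    (r : nat) (Xs : 'I_r -> {vspace X}) : Prop :=
  [/\ (1 < r)%N,
      (\sum_(i < r) Xs i)%VS = fullv,
      directv (\sum_(i < r) Xs i)%VS
    & forall i, (A @: Xs i <= Xs i)%VS].

Definition rho (F : fieldType) (X : vectType F) (r : nat)
    (Xs : 'I_r -> {vspace X}) (i : 'I_r) : 'End(X) :=
  sumv_pi (\sum_(j < r) Xs j)%VS i.

Definition in_Gs (F : fieldType) (X : vectType F) (R : realFieldType) (r : nat)
    (Xs : 'I_r -> {vspace X}) (h : X -> R) : Prop :=
  (forall x, 0 <= h x) /\ forall x, h x = \sum_(i < r) h (rho Xs i x).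

Definition Esub (F : fieldType) (X U : vectType F) (B : 'Hom(U, X))
    (S : {vspace X}) : {vspace U} := (B @^-1: S)%VS.

Definition is_min (T : Type) (R : realFieldType) (P : T -> Prop) (f : T -> R)
    (m : R) : Prop :=
  (exists2 u, P u & f u = m) /\ (forall u, P u -> m <= f u).

Definition in_argmin (T : Type) (R : realFieldType) (P : T -> Prop) (f : T -> R)
    (u : T) : Prop :=
  P u /\ (forall v, P v -> f u <= f v).

(* Values outside S are
   irrelevant. *)
Definition is_cost_to_go (F : fieldType) (X U : vectType F) (R : realFieldType)
    (A : 'End(X)) (B : 'Hom(U, X)) (E : {vspace U}) (S : {vspace X})
    (g : X -> R) (T : nat) (J : nat -> X -> R) : Prop :=
  (forall z, z \in S -> J T z = g z) /\
  (forall t, (t < T)%N -> forall z, z \in S ->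
     exists2 m, is_min (fun u => u \in E) (fun u => J t.+1 (A z + B u)) m
              & J t z = g z + m).

(* Main.v *)
Require Import Defs.
From HB Require Import structures.
From mathcomp Require Import all_boot all_order all_algebra.
From mathcomp Require Import zify.
Import Order.TTheory GRing.Theory Num.Theory.
Local Open Scope ring_scope.

Theorem proposition3 (F : fieldType) (X U : vectType F) (R : realFieldType)
    (A : 'End(X)) (B : 'Hom(U, X)) (g : X -> R)
    (r : nat) (Xs : 'I_r -> {vspace X}) (T : nat)
    (J : nat -> X -> R) (Jbar : 'I_r -> nat -> X -> R) :
  injective B ->
  (forall x, 0 <= g x) -> (forall x, g x = 0 <-> x = 0) ->
  is_decomposition A Xs ->
  in_Gs Xs g ->
  (0 < T)%N ->
  is_cost_to_go A B fullv fullv g T J ->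
  (forall i, is_cost_to_go A B (Esub B (Xs i)) (Xs i) g T (Jbar i)) ->
  (forall x t, (t < T)%N ->
     exists u, in_argmin (fun _ => True) (fun v => J t.+1 (A x + B v)) u
               /\ u \in (\sum_(i < r) Esub B (Xs i))%VS) ->
  forall t, (t <= T)%N -> forall i z, z \in Xs i -> J t z = Jbar i t z.
Proof.
move=> _ g0 gz [_ Hfull Hdir Hinv] [_ Hgs] _ [HJT HJt] Hbar Harg.
have rhoD : forall i a b, rho Xs i (a + b) = rho Xs i a + rho Xs i b.
  by move=> i a b; rewrite /rho linearD.
have rho_in : forall i x, rho Xs i x \in Xs i.
  by move=> i x; exact: memv_sum_pi.
have rhoP : forall ys : 'I_r -> X, (forall j, ys j \in Xs j) ->
    forall i, rho Xs i (\sum_j ys j) = ys i.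
  move=> ys Hys i.
  set x := \sum_j ys j.
  have Hs : \sum_j rho Xs j x = x.
    by apply: sumv_pi_sum; rewrite Hfull memvf.
  move/directv_sum_unique: Hdir => Hu.
  have := Hu (fun j => rho Xs j x) ys (fun j _ => rho_in j x) (fun j _ => Hys j).
  rewrite Hs eqxx => /esym/forall_inP/(_ i isT)/eqP.
  done.
have rho_mem : forall i j z, z \in Xs i -> rho Xs j z = if j == i then z else 0.
  move=> i j z Hz.
  have E : \sum_k (if k == i then z else 0) = z.
    by rewrite (bigD1 i) //= eqxx big1 ?addr0 // => k /negPf ->.
  rewrite -{1}E rhoP // => k; case: eqP => [->|_] //; exact: mem0v.
have rhoA : forall i x, rho Xs i (A x) = A (rho Xs i x).
  move=> i x.
  have Hs : \sum_j rho Xs j x = x.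
    by apply: sumv_pi_sum; rewrite Hfull memvf.
  rewrite -{1}Hs linear_sum rhoP // => j.
  exact: (subvP (Hinv j) _ (memv_img A (rho_in j x))).
have rhoB : forall us : 'I_r -> U, (forall j, us j \in Esub B (Xs j)) ->
    forall i, rho Xs i (B (\sum_j us j)) = B (us i).
  move=> us Hus i; rewrite linear_sum rhoP // => j.
  by rewrite memv_preim; exact: Hus.
have AXs : forall i z, z \in Xs i -> A z \in Xs i.
  by move=> i z Hz; exact: (subvP (Hinv i) _ (memv_img A Hz)).
have down : forall P : nat -> Prop, P T -> (forall t, (t < T)%N -> P t.+1 -> P t) ->
    forall t, (t <= T)%N -> P t.
  move=> P PT PS t ht.
  have : forall k t, (t + k)%N = T -> P t.
    elim=> [|k IH] t' e; first by rewrite addn0 in e; rewrite e.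
    apply: PS; first by rewrite -e; lia.
    by apply: IH; rewrite -e; lia.
  by move=> /(_ (T - t)%N t); apply; lia.
have Jb : forall t, (t <= T)%N -> forall i,
    Jbar i t 0 = 0 /\ forall z, z \in Xs i -> 0 <= Jbar i t z.
  apply: down.
    move=> i; have [H1 _] := Hbar i; split; first by rewrite H1 ?mem0v //; apply/gz.
    by move=> z Hz; rewrite H1.
  move=> t ht IH i; have [_ H2] := Hbar i; have [IH0 IHp] := IH i.
  split.
    have [m [[u0 Eu0 Hu0] Hm] ->] := H2 t ht 0 (mem0v _).
    have -> : g 0 = 0 by apply/gz.
    rewrite add0r; apply/eqP; rewrite eq_le; apply/andP; split.
      by have := Hm 0 (mem0v _); rewrite !linear0 addr0 IH0.
    rewrite -Hu0; apply: IHp; rewrite linear0 add0r memv_preim; exact: Eu0.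
  move=> z Hz; have [m [[u0 Eu0 Hu0] Hm] ->] := H2 t ht z Hz.
  apply: addr_ge0 => //; rewrite -Hu0; apply: IHp.
  by apply: memvD; [exact: AXs | rewrite memv_preim].
have Main : forall t, (t <= T)%N -> forall x, J t x = \sum_i Jbar i t (rho Xs i x).
  apply: down.
    move=> x; rewrite HJT ?memvf // Hgs; apply: eq_bigr => i _.
    by have [H1 _] := Hbar i; rewrite H1.
  move=> t ht IH x.
  have [m [[u0 _ Hu0] Hmin] ->] := HJt t ht x (memvf _).
  have Hi : forall i, exists u, u \in Esub B (Xs i) /\
      (Jbar i t (rho Xs i x) = g (rho Xs i x) + Jbar i t.+1 (A (rho Xs i x) + B u)
       /\ forall v, v \in Esub B (Xs i) ->
          Jbar i t.+1 (A (rho Xs i x) + B u) <= Jbar i t.+1 (A (rho Xs i x) + B v)).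
    move=> i; have [_ H2] := Hbar i.
    have [mi [[ui Ei Hui] Hmi] ->] := H2 t ht _ (rho_in i x).
    by exists ui; split => //; split; [rewrite Hui | move=> v /Hmi; rewrite Hui].
  have [us Hus] := fin_all_exists Hi.
  under eq_bigr => i _ do rewrite (proj1 (proj2 (Hus i))).
  rewrite big_split /= -Hgs; congr (_ + _).
  apply/eqP; rewrite eq_le; apply/andP; split.
    apply: le_trans (Hmin (\sum_j us j) (memvf _)) _.
    rewrite IH //.
    have Eus : forall j, us j \in Esub B (Xs j) by move=> j; exact: (proj1 (Hus j)).
    rewrite le_eqVlt; apply/orP; left; apply/eqP; apply: eq_bigr => i _.
    congr (Jbar _ _ _); rewrite -rhoA -(rhoB us Eus); exact: rhoD.
  have [us' [[_ Hus'] Hmem]] := Harg x t ht.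
  move/memv_sumP: Hmem => [vs Evs Evs']; rewrite Evs' in Hus'.
  have H2 := Hus' u0 I; rewrite /= in H2; rewrite -Hu0; apply: (le_trans _ H2).
  rewrite IH //.
  apply: ler_sum => i _.
  have -> : rho Xs i (A x + B (\sum_j vs j)) = A (rho Xs i x) + B (vs i).
    rewrite -rhoA -(rhoB vs (fun j => Evs j isT)); exact: rhoD. apply: (proj2 (proj2 (Hus i))); exact: Evs.
move=> t ht i z Hz.
rewrite Main // (bigD1 i) //= (rho_mem i i z Hz) eqxx big1 ?addr0 // => j /negPf ji.
by rewrite (rho_mem i j z Hz) ji; case: (Jb t ht j).
Qed.
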